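(* Let $n\geq 4$ and let $T_n$ be the group with generators $z,t_1,\dots,t_{n-1}$ and relations $t_i^2=1$ ($1\le i\le n-1$), $(t_jt_{j+1})^3=1$ ($1\le j\le n-2$), $(t_kt_l)^2=z$ (for $k\le l-2$), $z^2=1$ and $zt_i=t_iz$ ($1\le i\le n-1$). Let $l\in\mathbb{N}$, let $\sigma=s_{i_1}s_{i_2}\cdots s_{i_l}\in\mathbb{S}_n$ with $i_1,\dots,i_l\in\{1,\dots,n-1\}$, and let $i,j\in\{1,\dots,n\}$ with $i\neq j$. Then \[ \sigma\triangleright[i\;j]=[\sigma(i)\;\sigma(j)]\,z^l . \]
   Context: $\mathbb{S}_n$ is the symmetric group, $s_k=(k\;k+1)$ denotes the adjacent transposition, and $p:T_n\to\mathbb{S}_n$ is the surjective homomorphism with $p(t_k)=s_k$, $p(z)=1$; its kernel is $\langle z\rangle$, which is central of order $2$. For $\sigma\in\mathbb{S}_n$ and $t\in T_n$, define $\sigma\triangleright t=\bar\sigma t\bar\sigma^{-1}$, where $\bar\sigma\in T_n$ is any element with $p(\bar\sigma)=\sigma$ (independent of the choice since $z$ is central). For $1\le i,j\le n$, $i\ne j$, the elements $[i\;j]\in T_n$ are defined inductively by $[i\;i+1]=t_i$; $[i\;j]=(s_i\triangleright[i+1\;j])\,z$ for $i+1<j$; and $[j\;i]=[i\;j]\,z$ for $i<j$. *)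

(* Defs.v *)
From mathcomp Require Import all_boot all_fingroup.
Set Implicit Arguments. Unset Strict Implicit. Unset Printing Implicit Defensive.

(* Generators: [None] is z, [Some k] (k : 'I_n.-1, 0-indexed) is t_(k+1).
   Since every generator is an involution (t_i^2 = 1, z^2 = 1), the group
   presented by the given relations is the monoid of words in the generators
   modulo the congruence generated by the relations; the inverse of a word
   is its reversal. *)
Definition gen (n : nat) := option 'I_n.-1.
Definition word (n : nat) := seq (gen n).

Definition gz {n} : gen n := None.
(* t_(a+1), for a 0-indexed position a < n-1 (junk value z if a >= n-1;
   never used in that range below) *)
Definition gt {n} (a : nat) : gen n := insub a.

Inductive trel (n : nat) : word n -> word n -> Prop :=
| trel_inv (i : 'I_n.-1) : trel [:: Some i; Some i] [::]
| trel_braid (j j' : 'I_n.-1) : val j' = (val j).+1 ->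
    trel [:: Some j; Some j'; Some j; Some j'; Some j; Some j'] [::]
| trel_far (k l : 'I_n.-1) : val k + 2 <= val l ->
    trel [:: Some k; Some l; Some k; Some l] [:: None]
| trel_z2 : trel [:: None; None] [::]
| trel_zcomm (i : 'I_n.-1) : trel [:: None; Some i] [:: Some i; None].

Inductive Teq (n : nat) : word n -> word n -> Prop :=
| Teq_rel u v a b : trel a b -> Teq (u ++ a ++ v) (u ++ b ++ v)
| Teq_refl w : Teq w w
| Teq_sym w1 w2 : Teq w1 w2 -> Teq w2 w1
| Teq_trans w1 w2 w3 : Teq w1 w2 -> Teq w2 w3 -> Teq w1 w3.

Definition winv {n} (w : word n) : word n := rev w.

(* adjacent transposition s_(k+1) = (k+1 k+2) (1-indexed), i.e. swapping
   0-indexed positions k and k+1 *)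
Lemma sadj_proof (n : nat) (k : 'I_n.-1) : (val k).+1 < n.
Proof. by case: n k => [|n] [k /= hk]. Qed.

Definition sadj (n : nat) (k : 'I_n.-1) : 'S_n :=
  tperm (widen_ord (leq_pred n) k) (Ordinal (sadj_proof k)).

Definition pgen (n : nat) (g : gen n) : 'S_n :=
  match g with None => 1%g | Some k => sadj k end.

(* the homomorphism p : T_n -> S_n on words; p (g1 g2 ... gm) is the
   composite map pgen g1 o pgen g2 o ... o pgen gm
   (recall (s * t) x = t (s x) in mathcomp). *)
Fixpoint pw (n : nat) (w : word n) : 'S_n :=
  match w with [::] => 1%g | g :: w' => (pw w' * pgen g)%g end.

Definition sprod (n : nat) (s : seq 'I_n.-1) : 'S_n :=
  pw [seq Some k | k <- s].

(* sigma |> t := sbar t sbar^{-1} for a lift sbar of sigma *)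
Definition tact (n : nat) (sbar t : word n) : word n := sbar ++ t ++ winv sbar.

(* [a+1  a+1+d] (1-indexed) for d >= 1, a 0-indexed:
   [i i+1] = t_i ; [i j] = (s_i |> [i+1 j]) z, using the lift t_i of s_i *)
Fixpoint brd (n : nat) (a d : nat) : word n :=
  match d with
  | 0 => [::]
  | 1 => [:: gt a]
  | d'.+1 => tact [:: gt a] (brd n a.+1 d') ++ [:: gz]
  end.

(* [i j] for 0-indexed positions i j : 'I_n (paper's [i+1 j+1]);
   [j i] = [i j] z for i < j. Junk value [::] when i = j. *)
Definition bracket (n : nat) (i j : 'I_n) : word n :=
  if (val i < val j)%N then brd n i (j - i)
  else if (val j < val i)%N then brd n j (i - j) ++ [:: gz]
  else [::].

(* Main.v *)
From Stdlib Require Import Setoid Morphisms RelationClasses.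
Require Import Defs.
From mathcomp Require Import all_boot all_fingroup.
From mathcomp Require Import zify.
Set Implicit Arguments. Unset Strict Implicit. Unset Printing Implicit Defensive.

Fact BB_key : unit. Proof. by []. Qed.
Definition BB := locked_with BB_key brd.
Lemma BBE : BB = brd. Proof. exact: locked_withE. Qed.

Section S.
Variable n : nat.
Implicit Types u v w : word n.

Lemma Teq_ctx (x u v y : word n) : Teq u v -> Teq (x ++ u ++ y) (x ++ v ++ y).
Proof.
elim=> [u0 v0 a b H|w0|w1 w2 _ IH|w1 w2 w3 _ IH1 _ IH2].
- have:= Teq_rel (x ++ u0) (v0 ++ y) H. by rewrite -!catA.
- exact: Teq_refl.
- exact: Teq_sym.
- exact: Teq_trans IH2.
Qed.

#[global] Instance Teq_equiv : Equivalence (@Teq n).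
Proof. split; [exact: Teq_refl|exact: Teq_sym|exact: Teq_trans]. Qed.

#[global] Instance cat_proper : Proper (@Teq n ==> @Teq n ==> @Teq n) cat.
Proof.
move=> u u' Hu v v' Hv. transitivity (u' ++ v).
- exact: (Teq_ctx [::] v Hu).
- by have := Teq_ctx u' [::] Hv; rewrite !cats0.
Qed.

#[global] Instance cons_proper x : Proper (@Teq n ==> @Teq n) (cons x).
Proof. move=> u v H. exact: (cat_proper (Teq_refl [:: x]) H). Qed.

Lemma rel_l a b w : trel a b -> Teq (a ++ w) (b ++ w).
Proof. by move=> H; have := Teq_rel [::] w H. Qed.

Lemma gtE m (h : m < n.-1) : gt m = Some (Ordinal h) :> gen n.
Proof. by rewrite /gt insubT. Qed.

Lemma zz w : Teq (gz :: gz :: w) w.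
Proof. exact: (rel_l w (trel_z2 n)). Qed.

Lemma zc_t m w : Teq (gz :: gt m :: w) (gt m :: gz :: w).
Proof.
case: (ltnP m n.-1) => h.
- rewrite gtE. exact: (rel_l w (trel_zcomm (Ordinal h))).
- rewrite /gt insubF; first reflexivity. by rewrite ltnNge h.
Qed.

Lemma zc_u u w : Teq (gz :: u ++ w) (u ++ gz :: w).
Proof.
elim: u => [|x u IH] /=; first reflexivity. case: x => [x|].
- by rewrite -IH; exact: (rel_l (u ++ w) (trel_zcomm x)).
- rewrite IH; reflexivity.
Qed.

Lemma tt m w : m < n.-1 -> Teq (gt m :: gt m :: w) w.
Proof. move=> h; rewrite gtE. exact: (rel_l w (trel_inv (Ordinal h))). Qed.


Lemma far_lt k l w : k < n.-1 -> l < n.-1 -> k + 2 <= l ->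
  Teq (gt k :: gt l :: w) (gt l :: gt k :: gz :: w).
Proof.
move=> hk hl hkl.
transitivity (gt k :: gt l :: gt k :: gt l :: gt l :: gt k :: w).
  by rewrite (tt _ hl) (tt _ hk); reflexivity.
rewrite !(gtE hk) !(gtE hl) -!(gtE hk) -!(gtE hl).
have := rel_l (gt l :: gt k :: w) (@trel_far n (Ordinal hk) (Ordinal hl) hkl).
rewrite -!(gtE hk) -!(gtE hl) /= => ->. rewrite zc_t zc_t. reflexivity.
Qed.

Lemma far m p w : m < n.-1 -> p < n.-1 -> m + 2 <= p \/ p + 2 <= m ->
  Teq (gt m :: gt p :: w) (gt p :: gt m :: gz :: w).
Proof.
move=> hm hp [h|h]; first exact: far_lt.
rewrite (far_lt (gz :: w) hp hm h) zz. reflexivity.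
Qed.

Lemma braid j w : j.+1 < n.-1 ->
  Teq (gt j :: gt j.+1 :: gt j :: w) (gt j.+1 :: gt j :: gt j.+1 :: w).
Proof.
move=> h1; have h0 : j < n.-1 by apply: ltnW.
transitivity (gt j :: gt j.+1 :: gt j :: gt j.+1 :: gt j :: gt j.+1 ::
              gt j.+1 :: gt j :: gt j.+1 :: w).
  rewrite (tt _ h1) (tt _ h0) (tt _ h1). reflexivity.
have := rel_l (gt j.+1 :: gt j :: gt j.+1 :: w)
   (@trel_braid n (Ordinal h0) (Ordinal h1) erefl).
rewrite -!(gtE h0) -!(gtE h1) /= => ->. reflexivity.
Qed.

Lemma brd1 a : BB n a 1 = [:: gt a].
Proof. by rewrite BBE. Qed.

Lemma brdS a d : BB n a d.+2 = gt a :: BB n a.+1 d.+1 ++ [:: gt a; gz].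
Proof. by rewrite BBE /= /tact /winv /= -catA. Qed.

Lemma zc_B a d w : Teq (gz :: BB n a d ++ w) (BB n a d ++ gz :: w).
Proof. exact: zc_u. Qed.

End S.

Ltac nm := do 3 rewrite -?catA ?cat_cons ?cat0s.
Ltac zn := repeat first [rewrite zz | rewrite zc_t | rewrite zc_B].


Section S2.
Variable n : nat.

Lemma comm d : forall a k (w : word n), 0 < d -> a + d < n -> k < n.-1 ->
  (k + 2 <= a \/ a + d + 1 <= k \/ (a + 1 <= k /\ k + 2 <= a + d)) ->
  Teq (gt k :: BB n a d ++ w) (BB n a d ++ gz :: gt k :: w).
Proof.
elim/ltn_ind: d => d IH a k w d0 hd hk hc.
case: d IH d0 hd hc => [//|[|d]] IH _ hd hc.
- rewrite brd1 /= (far _ hk); try lia. zn. reflexivity.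
- rewrite brdS; nm.
  have ha : a < n.-1 by lia.
  case: (eqVneq k a.+1) => [ek|nk].
  + subst k. case: d IH hd hc => [|d] IH hd hc; first lia.
    rewrite brdS; nm; rewrite -(braid _ hk).
    rewrite (IH d.+1 _ a.+2 a); try lia. zn.
    rewrite (braid _ hk). reflexivity.
  + rewrite (far _ hk ha); try lia.
    zn. rewrite (IH d.+1 _ a.+1 k); try lia. zn.
    rewrite (far _ hk ha); try lia. zn. reflexivity.
Qed.

End S2.

Section S3.
Variable n : nat.

Lemma down e : forall a k (w : word n), k = a + e + 1 -> a + e + 2 < n ->
  Teq (gt k :: BB n a e.+2 ++ w) (BB n a e.+1 ++ gz :: gt k :: w).
Proof.
elim: e => [|e IH] a k w ek hn.
- subst k. rewrite addn0 addn1 brdS !brd1; nm.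
  have h1 : a.+1 < n.-1 by lia.
  rewrite -(braid _ h1) tt; last lia. zn. reflexivity.
- have hk : k < n.-1 by lia. have ha : a < n.-1 by lia.
  rewrite (@brdS n a e.+1) (@brdS n a e); nm.
  rewrite (far _ hk ha); try lia. zn.
  rewrite (IH a.+1 k); try lia. zn.
  rewrite (far _ hk ha); try lia. zn. reflexivity.
Qed.

Lemma up e : forall a k (w : word n), k = a + e + 1 -> k < n.-1 ->
  Teq (gt k :: BB n a e.+1 ++ w) (BB n a e.+2 ++ gz :: gt k :: w).
Proof.
elim: e => [|e IH] a k w ek hk.
- subst k. rewrite addn0 addn1 brdS !brd1; nm. zn.
  rewrite braid ?tt; try lia. reflexivity.
- have ha : a < n.-1 by lia.
  rewrite (@brdS n a e) (@brdS n a e.+1); nm.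
  rewrite (far _ hk ha); try lia. zn.
  rewrite (IH a.+1 k); try lia. zn.
  rewrite (far _ hk ha); try lia. zn. reflexivity.
Qed.

End S3.

Definition Br n (x y : nat) : word n :=
  if x < y then BB n x (y - x) else if y < x then BB n y (x - y) ++ [:: gz] else [::].
Definition sw (k x : nat) := if x == k then k.+1 else if x == k.+1 then k else x.

Lemma sw_k k : sw k k = k.+1. Proof. by rewrite /sw eqxx. Qed.
Lemma sw_k1 k : sw k k.+1 = k. Proof. by rewrite /sw eqxx; case: eqVneq => //; lia. Qed.
Lemma sw_o k x : x != k -> x != k.+1 -> sw k x = x.
Proof. by rewrite /sw => /negbTE -> /negbTE ->. Qed.
Lemma sw_inv k : cancel (sw k) (sw k).
Proof.
move=> x; have [->|h1] := eqVneq x k; first by rewrite sw_k sw_k1.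
have [->|h2] := eqVneq x k.+1; first by rewrite sw_k1 sw_k.
by rewrite !sw_o.
Qed.

Lemma Br_lt n x y : x < y -> Br n x y = BB n x (y - x).
Proof. by rewrite /Br => ->. Qed.
Lemma Br_gt n x y : y < x -> Br n x y = BB n y (x - y) ++ [:: gz].
Proof. by rewrite /Br => h; rewrite ltnNge (ltnW h) /= h. Qed.

Section S4.
Variable n : nat.

Lemma core a b k : a < b -> b < n -> k < n.-1 ->
  Teq (gt k :: Br n a b ++ [:: gt k]) (Br n (sw k a) (sw k b) ++ [:: gz]).
Proof.
move=> hab hb hk. rewrite (Br_lt _ hab).
have [hc|hc] : (k + 2 <= a \/ b + 1 <= k \/ (a + 1 <= k /\ k + 2 <= b)) \/
  (k.+1 = a \/ k = a \/ (k.+1 = b /\ a < k) \/ k = b) by lia.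
- rewrite (sw_o (x:=a)) ?(sw_o (x:=b)); try (apply/eqP; lia).
  rewrite (Br_lt _ hab) (comm (k:=k)); try lia. rewrite tt //. reflexivity.
- case: hc => [ea|[ea|[[eb hak]|eb]]].
  + subst a. rewrite sw_k1 sw_o; try (apply/eqP; lia).
    rewrite Br_lt; last lia.
    have -> : b - k = (b - k.+2).+2 by lia.
    have -> : b - k.+1 = (b - k.+2).+1 by lia.
    rewrite brdS; nm. zn. reflexivity.
  + subst a. rewrite sw_k.
    case: (eqVneq b k.+1) => [eb|nb].
    * subst b. rewrite sw_k1 Br_gt // subSnn brd1 /= tt //. zn. reflexivity.
    * rewrite sw_o; try (apply/eqP; lia).
      rewrite Br_lt; last lia.
      have -> : b - k = (b - k.+2).+2 by lia.
      have -> : b - k.+1 = (b - k.+2).+1 by lia.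
      rewrite brdS; nm. rewrite tt //. zn. rewrite tt //. reflexivity.
  + subst b. rewrite sw_k1 sw_o; try (apply/eqP; lia).
    rewrite Br_lt; last lia.
    have -> : k - a = (k - a - 1).+1 by lia.
    have -> : k.+1 - a = (k - a - 1).+2 by lia.
    rewrite (@down n (k - a - 1) a k); try lia. rewrite tt //. reflexivity.
  + subst b. rewrite sw_k sw_o; try (apply/eqP; lia).
    rewrite Br_lt; last lia.
    have -> : k - a = (k - a - 1).+1 by lia.
    have -> : k.+1 - a = (k - a - 1).+2 by lia.
    rewrite (@up n (k - a - 1) a k); try lia. rewrite tt //. reflexivity.
Qed.

End S4.

Section S5.
Variable n : nat.

Lemma Br_swap x y : x != y -> Teq (Br n x y ++ [:: gz]) (Br n y x).
Proof.
move=> hxy. case: (ltngtP x y) => h.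
- rewrite (Br_lt _ h) (Br_gt _ h). reflexivity.
- rewrite (Br_lt _ h) (Br_gt _ h) -catA /=. rewrite zz cats0. reflexivity.
- by move: hxy; rewrite h eqxx.
Qed.

Lemma core_all a b k : a != b -> a < n -> b < n -> k < n.-1 ->
  Teq (gt k :: Br n a b ++ [:: gt k]) (Br n (sw k a) (sw k b) ++ [:: gz]).
Proof.
move=> hab ha hb hk. case: (ltngtP a b) => h.
- exact: core.
- rewrite (Br_gt _ h) -(Br_lt _ h) -catA /= zc_t.
  have := cat_proper (core h ha hk) (Teq_refl [:: gz]).
  rewrite /= -!catA /= => ->. rewrite zz cats0 Br_swap. reflexivity.
  by rewrite (can_eq (@sw_inv k)).
- by move: hab; rewrite h eqxx.
Qed.

End S5.

Section S6.
Variable n : nat.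

Lemma sadj_val (k : 'I_n.-1) (i : 'I_n) : val (sadj k i) = sw k (val i).
Proof.
rewrite /sadj; case: tpermP => [->|->|h1 h2] /=; first by rewrite sw_k.
  by rewrite sw_k1.
rewrite sw_o //.
  by apply/eqP => e; apply: h1; apply: val_inj.
by apply/eqP => e; apply: h2; apply: val_inj.
Qed.

Lemma bracketE (i j : 'I_n) : bracket i j = Br n i j.
Proof. by rewrite /bracket /Br BBE. Qed.

Lemma zs_u c (u w : word n) : Teq (nseq c gz ++ u ++ w) (u ++ nseq c gz ++ w).
Proof.
elim: c => [|c IH] /=; first reflexivity.
rewrite IH zc_u. reflexivity.
Qed.

Lemma zs_u1 c (u : word n) : Teq (nseq c gz ++ u) (u ++ nseq c gz).
Proof. by have := zs_u c u [::]; rewrite !cats0. Qed.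

Lemma gen_conj (g : gen n) (i j : 'I_n) : i != j ->
  Teq (tact [:: g] (bracket i j))
      (bracket (pgen g i) (pgen g j) ++ nseq (isSome g) gz).
Proof.
move=> hij. rewrite /tact /winv /= !bracketE.
case: g => [k|] /=.
- have -> : Some k = gt (val k) by rewrite /gt valK.
  rewrite core_all //; last by case: k => /=.
  rewrite !sadj_val. reflexivity.
- rewrite !perm1 cats0 zc_u zz cats0. reflexivity.
Qed.

Lemma word_conj (w : word n) (i j : 'I_n) : i != j ->
  Teq (tact w (bracket i j))
      (bracket (pw w i) (pw w j) ++ nseq (count isSome w) gz).
Proof.
elim: w i j => [|g w IH] i j hij /=.
- by rewrite /tact /winv /= cats0 !perm1 cats0; reflexivity.
- have -> : tact (g :: w) (bracket i j) = tact [:: g] (tact w (bracket i j)).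
    by rewrite /tact /winv rev_cons -cats1 /= -!catA.
  rewrite /tact /winv /= in IH *. rewrite (IH i j hij).
  rewrite /= -catA zs_u1 /=.
  have := cat_proper (@gen_conj g (pw w i) (pw w j) _) (Teq_refl (nseq (count isSome w) (@gz n))).
  rewrite /tact /winv /= -!catA /= => ->; last by rewrite (inj_eq (@perm_inj _ _)).
  by rewrite !permM nseqD; reflexivity.
Qed.

Lemma pw_odd (w : word n) : odd_perm (pw w) = odd (count isSome w).
Proof.
elim: w => [|g w IH] /=; first by rewrite odd_perm1.
rewrite odd_permM IH oddD addbC; case: g => [k|] /=; last by rewrite odd_perm1.
rewrite /sadj odd_tperm.
have -> : (widen_ord (leq_pred n) k != Ordinal (sadj_proof k)) = true.
  by apply/eqP => /(congr1 val) /=; lia.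
by [].
Qed.

Lemma nseq_odd c : Teq (nseq c (@gz n)) (nseq (odd c) gz).
Proof.
elim: c => [|c IH] /=; first reflexivity.
rewrite IH; case: (odd c) => /=; last reflexivity.
rewrite zz. reflexivity.
Qed.

End S6.

Theorem proposition3p5 (n : nat) (hn : 4 <= n) (l : nat)
  (s : seq 'I_n.-1) (hl : size s = l) (i j : 'I_n) (hij : i != j)
  (sbar : word n) (hlift : pw sbar = sprod s) :
  Teq (tact sbar (bracket i j))
      (bracket (sprod s i) (sprod s j) ++ nseq l gz).
Proof.
rewrite (word_conj _ hij) hlift.
have hp : odd (count isSome sbar) = odd l.
  rewrite -pw_odd hlift /sprod pw_odd -hl count_map.
  by rewrite (eq_count (a2 := predT)) // count_predT.
rewrite (@nseq_odd n (count isSome sbar)) hp -(@nseq_odd n l). reflexivity.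
Qed.
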